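(* Let $m\ge1$ and let $X_1,X_2,\dots$ be i.i.d. random words in $\{0,1\}^m$, where word $\mathbf{w}_i$ has probability $P_i$ and the words are indexed so that $P_1\ge P_2\ge\dots\ge P_{2^m}$. Let $\mathbf{y}_1,\dots,\mathbf{y}_{2^m}$ be the distinct words of $\{0,1\}^m$ listed in order of nondecreasing cost, with $c_i=c(\mathbf{y}_i)$, and let $\phi$ be the direct shaping encoder (described in the context). Let $C_t=c(\phi(X_1,\dots,X_t))/t$, where $c(\phi(X_1,\dots,X_t))$ is the sum of the costs of the first $t$ output codewords. Then the asymptotic expected average cost satisfies $$C_\infty=\lim_{t\to\infty}E(C_t)=\sum_i P_ic_i.$$
   Context: Direct shaping code: the encoder maintains a list of all $2^m$ input words paired with frequency counts $n_k$ (initially all $0$, words ordered lexicographically), kept in nonincreasing order of counts. When input word $\mathbf{x}$ arrives, it is mapped to the output word $\mathbf{y}_k$ occupying the same position $k$ as $\mathbf{x}$ in the list; then the count of $\mathbf{x}$ is increased by one, from $n$ to $n+1$, and $\mathbf{x}$ is moved above all pairs with counts less than or equal to $n+1$. Costs: each codeword $\mathbf{y}$ has a cost $c(\mathbf{y})$ (e.g. for SLC flash, the number of $0$ symbols in $\mathbf{y}$), and the cost of a sequence of codewords is the sum of their costs. No channel errors are assumed. *)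

(* Defs.v *)
From HB Require Import structures.
From mathcomp Require Import all_boot all_order all_algebra.
From mathcomp Require Import all_classical all_reals all_analysis.

Set Implicit Arguments.
Unset Strict Implicit.
Unset Printing Implicit Defensive.

Import Order.TTheory GRing.Theory Num.Theory.
Local Open Scope ring_scope.

(* Words of {0,1}^m; false = 0, true = 1. *)
Notation word m := (m.-tuple bool).

Definition word0 (m : nat) : word m := [tuple of nseq m false].

Fixpoint lexle (u v : seq bool) : bool :=
  match u, v with
  | [::], _ => true
  | _ :: _, [::] => false
  | a :: u', b :: v' => (~~ a && b) || ((a == b) && lexle u' v')
  end.

Definition init_list (m : nat) : seq (word m) :=
  sort (fun u v : word m => lexle u v) (enum {: word m}).

Record ds_state (m : nat) := DSState {
  st_list : seq (word m);
  st_cnt : {ffun word m -> nat} }.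

Definition init_state (m : nat) : ds_state m :=
  DSState (init_list m) [ffun => 0%N].

(* Update after input word x: count of x goes from n to n+1, and x is moved
   above all pairs with count <= n+1. *)
Definition ds_step (m : nat) (st : ds_state m) (x : word m) : ds_state m :=
  let n1 := (st_cnt st x).+1 in
  let cnt' := [ffun w => if w == x then n1 else st_cnt st w] in
  let l' := rem x (st_list st) in
  let k := find (fun w => (cnt' w <= n1)%N) l' in
  DSState (take k l' ++ x :: drop k l') cnt'.

(* Positions (0-based) of the successive input words in the list at the time
   they arrive. *)
Fixpoint ds_positions (m : nat) (st : ds_state m) (s : seq (word m)) : seq nat :=
  match s with
  | [::] => [::]
  | x :: s' => index x (st_list st) :: ds_positions (ds_step st x) s'
  end.

(* Direct shaping encoder phi: the input word at position k is mapped to the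
   output word y_k, where ys = [y_1; ...; y_{2^m}] (0-based nth). *)
Definition ds_encode (m : nat) (ys : seq (word m)) (s : seq (word m)) : seq (word m) :=
  map (fun k => nth (word0 m) ys k) (ds_positions (init_state m) s).

Definition seq_cost (R : realType) (m : nat) (c : word m -> R) (s : seq (word m)) : R :=
  \sum_(y <- s) c y.

Definition expected_avg_cost (R : realType) (m : nat) (P c : word m -> R)
    (ys : seq (word m)) (t : nat) : R :=
  \sum_(s : t.-tuple (word m))
     (\prod_(x <- s) P x) * (seq_cost c (ds_encode ys s) / t%:R).

(* Main.v *)
Require Import Defs.
From HB Require Import structures.
From mathcomp Require Import all_boot all_order all_algebra.
From mathcomp Require Import all_classical all_reals all_analysis.
From mathcomp Require Import ring lra.
Import Order.TTheory GRing.Theory Num.Theory.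
Local Open Scope ring_scope.
Local Open Scope classical_set_scope.


Lemma sum_perm_enum (T : finType) (R : numDomainType) (F : T -> R) (l : seq T) :
  perm_eq l (enum T) -> \sum_(x : T) F x = \sum_(x <- l) F x.
Proof. by move=> H; rewrite (perm_big _ H) big_enum; apply: eq_bigl. Qed.

Lemma sorted_true (T : Type) (l : seq T) : sorted (fun _ _ => true) l.
Proof. by elim: l => //= a [|b l] IH //=. Qed.



Section DS.
Variable m : nat.
Local Notation W := (word m).

Definition fin (s : seq W) := foldl (@ds_step m) (init_state m) s.

Lemma ds_positions_rcons (st : ds_state m) (s : seq W) (x : W) :
  ds_positions st (rcons s x) =
  rcons (ds_positions st s) (index x (st_list (foldl (@ds_step m) st s))).
Proof. by elim: s st => [|a s IH] st //=; rewrite IH. Qed.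

Lemma cnt_step (st : ds_state m) (x w : W) :
  st_cnt (ds_step st x) w = (st_cnt st w + (x == w))%N.
Proof.
rewrite /ds_step /= ffunE eq_sym; case: eqP => [->|_]; by rewrite ?addn1 ?addn0.
Qed.

Lemma cnt_foldl (st : ds_state m) (s : seq W) (w : W) :
  st_cnt (foldl (@ds_step m) st s) w = (st_cnt st w + count_mem w s)%N.
Proof.
elim: s st => [|a s IH] st /=; first by rewrite addn0.
by rewrite IH cnt_step addnA.
Qed.

Lemma cnt_fin s w : st_cnt (fin s) w = count_mem w s.
Proof. by rewrite /fin cnt_foldl /= ffunE. Qed.

Definition Inv (st : ds_state m) :=
  perm_eq (st_list st) (enum {: W}) &&
  sorted (fun u v => st_cnt st v <= st_cnt st u)%N (st_list st).

Lemma all_take_find (T : Type) (p : pred T) (s : seq T) :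
  all (predC p) (take (find p s) s).
Proof. by elim: s => //= a s IH; case pa: (p a) => //=; rewrite pa IH. Qed.

Lemma drop_find (T : Type) (p : pred T) (s : seq T) :
  drop (find p s) s = [::] \/ exists v d, drop (find p s) s = v :: d /\ p v.
Proof.
elim: s => [|a s IH] /=; first by left.
case pa: (p a) => /=; last exact: IH.
by right; exists a, s.
Qed.

Lemma Inv_step (st : ds_state m) (x : W) : Inv st -> Inv (ds_step st x).
Proof.
case/andP => Hperm Hsort.
have Hu : uniq (st_list st) by rewrite (perm_uniq Hperm) enum_uniq.
have Hx : x \in st_list st by rewrite (perm_mem Hperm) mem_enum.
rewrite /Inv /ds_step /=.
set n1 := (st_cnt st x).+1.
set cnt' := [ffun w => _].
set l' := rem x (st_list st).
set k := find _ l'.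
apply/andP; split.
  apply: perm_trans _ Hperm.
  rewrite -cat1s perm_catCA /= cat_take_drop perm_sym.
  exact: perm_to_rem.
have rtr : transitive (fun u v : W => (cnt' v <= cnt' u)%N).
  by move=> b a d h1 h2; exact: leq_trans h2 h1.
have Hl' : sorted (fun u v : W => (cnt' v <= cnt' u)%N) l'.
  have -> : l' = [seq w <- st_list st | predC1 x w] by rewrite /l' rem_filter.
  rewrite (@eq_in_sorted _ (predC1 x) _ (fun u v => st_cnt st v <= st_cnt st u)%N).
  - apply: sorted_filter => //.
    by move=> b a d h1 h2; exact: leq_trans h2 h1.
  - by move=> u v /= hu hv; rewrite /cnt' !ffunE (negPf hu) (negPf hv).
  - exact: filter_all.
rewrite (sorted_pairwise rtr) in Hl'.
rewrite -(cat_take_drop k l') pairwise_cat in Hl'.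
case/and3P: Hl' => Hrel Htk Hdk.
rewrite (sorted_pairwise rtr) pairwise_cat /= Htk Hdk allrel_consr Hrel !andbT.
have cx : cnt' x = n1 by rewrite /cnt' ffunE eqxx.
apply/andP; split.
  apply/allP => u /(allP (all_take_find _ _ _)) /= hu.
  by rewrite cx ltnW // ltnNge.
case: (drop_find _ (fun w => (cnt' w <= n1)%N) l') => [Hd | [v [d [Hd pv]]]].
  by rewrite -/k Hd.
rewrite -/k Hd /= cx pv /=.
rewrite -/k Hd /= in Hdk.
case/andP: Hdk => Hv _.
apply/allP => w wd.
exact: leq_trans (allP Hv w wd) pv.
Qed.
End DS.


Section Main.
Variables (R : realType) (m : nat) (P c : word m -> R) (ws ys : seq (word m)).
Local Notation W := (word m).
Hypothesis P_ge0 : forall w, 0 <= P w.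
Hypothesis P_sum1 : \sum_(w : word m) P w = 1.
Hypothesis hws : perm_eq ws (enum {: W}).
Hypothesis hwsP : sorted (fun u v => P v <= P u) ws.
Hypothesis hys : perm_eq ys (enum {: W}).

Definition Ex t (g : seq (word m) -> R) : R :=
  \sum_(s : t.-tuple (word m)) (\prod_(x <- s) P x) * g s.

Lemma Ex0 g : Ex 0 g = g [::].
Proof.
rewrite /Ex (eq_bigr (fun _ => (\prod_(x <- [::]) P x) * g [::])); last first.
  by move=> s _; rewrite tuple0.
by rewrite sumr_const card_tuple expn0 big_nil mul1r.
Qed.

Lemma ExS t g : Ex t.+1 g = \sum_(x : word m) P x * Ex t (fun s => g (x :: s)).
Proof.
rewrite /Ex (reindex (fun p : word m * t.-tuple (word m) => [tuple of p.1 :: p.2])) /=; last first.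
  exists (fun s : t.+1.-tuple (word m) => (thead s, [tuple of behead s])).
    by move=> [x s] _ /=; congr pair; apply: val_inj.
  by move=> s _; rewrite [RHS]tuple_eta.
rewrite -(pair_bigA _ (fun x (s : t.-tuple (word m)) => (\prod_(y <- x :: s) P y) * g (x :: s))) /=; apply: eq_bigr => x _.
rewrite mulr_sumr; apply: eq_bigr => s _.
by rewrite big_cons mulrA.
Qed.

Lemma Ex_ext t (f g : seq (word m) -> R) : (forall s : t.-tuple (word m), f s = g s) -> Ex t f = Ex t g.
Proof. by move=> H; apply: eq_bigr => s _; rewrite H. Qed.

Lemma Ex_add t (f g : seq (word m) -> R) : Ex t (fun s => f s + g s) = Ex t f + Ex t g.
Proof. by rewrite /Ex -big_split; apply: eq_bigr => s _; rewrite mulrDr. Qed.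

Lemma Ex_scale t k (f : seq (word m) -> R) : Ex t (fun s => k * f s) = k * Ex t f.
Proof. by rewrite /Ex mulr_sumr; apply: eq_bigr => s _; rewrite mulrCA. Qed.

Lemma Ex_sum t (I : finType) (F : I -> seq (word m) -> R) :
  Ex t (fun s => \sum_i F i s) = \sum_i Ex t (F i).
Proof.
rewrite /Ex (exchange_big) /=; apply: eq_bigr => s _; by rewrite mulr_sumr.
Qed.

Lemma Ex_one t : Ex t (fun _ => 1) = 1.
Proof.
elim: t => [|t IH]; first by rewrite Ex0.
by rewrite ExS -[RHS]P_sum1; apply: eq_bigr => x _; rewrite IH mulr1.
Qed.

Lemma Ex_cst t k : Ex t (fun _ => k) = k.
Proof. by rewrite -[k]mulr1 -[in RHS](Ex_one t) -Ex_scale. Qed.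

Lemma Ex_le t (f g : seq (word m) -> R) : (forall s : t.-tuple (word m), f s <= g s) -> Ex t f <= Ex t g.
Proof.
move=> H; apply: ler_sum => s _; apply: ler_wpM2l; last exact: H.
by apply: prodr_ge0 => x _.
Qed.

Lemma Ex_norm t (f : seq (word m) -> R) : `|Ex t f| <= Ex t (fun s => `|f s|).
Proof.
apply: le_trans (ler_norm_sum _ _ _) _; apply: ler_sum => s _.
rewrite normrM ger0_norm //; by apply: prodr_ge0 => x _.
Qed.

Lemma Ex_rcons t g : Ex t.+1 g = Ex t (fun s => \sum_(x : word m) P x * g (rcons s x)).
Proof.
elim: t g => [|t IH] g.
  rewrite ExS Ex0; apply: eq_bigr => x _; by rewrite Ex0.
rewrite ExS [RHS]ExS; apply: eq_bigr => x _; by rewrite IH.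
Qed.




Definition Fl (l : seq W) : R :=
  \sum_(x : W) P x * c (nth (word0 m) ys (index x l)).

Lemma zip_sum_map (l ys' : seq W) :
  \sum_(p <- zip l ys') P p.1 * c p.2 = \sum_(p <- zip (map P l) ys') p.1 * c p.2.
Proof.
elim: l ys' => [|a l IH] [|b ys'] /=; try by rewrite !big_nil.
by rewrite !big_cons IH.
Qed.

Lemma index_sum (l ys' : seq W) : uniq l -> size ys' = size l ->
  \sum_(x <- l) P x * c (nth (word0 m) ys' (index x l)) =
  \sum_(p <- zip l ys') P p.1 * c p.2.
Proof.
elim: l ys' => [|a l IH] ys'; first by case: ys' => [|? ?] /= _ _; rewrite !big_nil.
case: ys' => [|b ys'] //= /andP [al ul] [hs].
rewrite !big_cons eqxx /=; congr (_ + _).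
rewrite -IH //; apply: eq_big_seq => x xl.
have -> : (a == x) = false by apply/eqP => ax; rewrite ax xl in al.
by [].
Qed.

Lemma Fl_zip (l : seq W) : perm_eq l (enum {: W}) -> size ys = size l ->
  Fl l = \sum_(p <- zip (map P l) ys) p.1 * c p.2.
Proof.
move=> Hp Hs; rewrite /Fl (sum_perm_enum _ _ _ _ Hp) index_sum //.
  exact: zip_sum_map.
by rewrite (perm_uniq Hp) enum_uniq.
Qed.

Definition K := \sum_(w : W) `|c w|.

Lemma K_ge0 : 0 <= K.
Proof. by apply: sumr_ge0 => w _. Qed.

Lemma c_le_K y : `|c y| <= K.
Proof.
rewrite /K (bigD1 y) //=; rewrite lerDl; by apply: sumr_ge0 => w _.
Qed.


Lemma Fl_bound l : `|Fl l| <= K.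
Proof.
apply: le_trans (ler_norm_sum _ _ _) _.
rewrite -[K]mul1r -P_sum1 mulr_suml; apply: ler_sum => x _.
by rewrite normrM ger0_norm // ler_wpM2l // c_le_K.
Qed.


Definition L := \sum_(p <- zip ws ys) P p.1 * c p.2.

Lemma Fl_sorted l : perm_eq l (enum {: W}) -> sorted (fun u v => P v <= P u) l ->
  Fl l = L.
Proof.
move=> Hp Hs.
have Hsz : size ys = size l by rewrite (perm_size hys) (perm_size Hp).
rewrite Fl_zip // /L zip_sum_map; congr (\sum_(p <- zip _ ys) _).
apply: (@sorted_eq _ (fun a b : R => b <= a)).
- by move=> b a d h1 h2; exact: le_trans h2 h1.
- by move=> a b /andP [h1 h2]; apply/le_anti/andP; split.
- by rewrite sorted_map.
- by rewrite sorted_map.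
- apply: perm_map; apply: perm_trans Hp _; by rewrite perm_sym.
Qed.

Lemma L_bound : `|L| <= K.
Proof. by rewrite -(Fl_sorted _ hws hwsP) Fl_bound. Qed.



Lemma Inv_foldl (st : ds_state m) (s : seq W) : Inv m st -> Inv m (foldl (@ds_step m) st s).
Proof. by elim: s st => [|a s IH] st //= H; apply: IH; apply: Inv_step. Qed.

Lemma Inv_fin (s : seq W) : Inv m (fin m s).
Proof.
apply: Inv_foldl; apply/andP; split; first by rewrite /= /init_list perm_sort.
apply: (sub_sorted _ (sorted_true _ _)) => u v _ /=; by rewrite !ffunE.
Qed.

Definition bad (s : seq W) : R :=
  \sum_(x : W) \sum_(y : W)
     (if P y < P x then (if (count_mem x s <= count_mem y s)%N then 1 else 0) else 0).

Lemma bad_ge0 s : 0 <= bad s.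
Proof.
apply: sumr_ge0 => x _; apply: sumr_ge0 => y _.
by case: ifP => _ //; case: ifP.
Qed.

Lemma bad_bound (s : seq W) :
  `|Fl (st_list (fin m s)) - L| <= 2 * K * bad s.
Proof.
case: (boolP [exists x, exists y, (P y < P x) && (count_mem x s <= count_mem y s)%N]).
  move/existsP => [x /existsP [y /andP [h1 h2]]].
  have Hb : 1 <= bad s.
    rewrite /bad (bigD1 x) //= (bigD1 y) //= h1 h2 -addrA lerDl.
    apply: addr_ge0.
      by apply: sumr_ge0 => z _; case: ifP => _ //; case: ifP.
    by apply: sumr_ge0 => z _; apply: sumr_ge0 => w _; case: ifP => _ //; case: ifP.
  apply: le_trans (ler_normB _ _) _.
  have H2 : `|Fl (st_list (fin m s))| + `|L| <= 2 * K.
    by rewrite mulr2n mulrDl mul1r lerD // ?Fl_bound ?L_bound.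
  apply: le_trans H2 _.
  by rewrite -{1}[2 * K]mulr1 ler_wpM2l // mulr_ge0 // K_ge0.
rewrite negb_exists => /forallP Hn.
have Hs : sorted (fun u v => P v <= P u) (st_list (fin m s)).
  case/andP: (Inv_fin s) => _ Hsrt.
  apply: sub_sorted Hsrt => u v /= h.
  rewrite leNgt; apply/negP => Puv.
  move: (Hn v); rewrite negb_exists => /forallP /(_ u); rewrite negb_and Puv /= -ltnNge.
  by move: h; rewrite !cnt_fin => h; rewrite ltnNge h.
case/andP: (Inv_fin s) => Hp _.
rewrite (Fl_sorted _ Hp Hs) subrr normr0.
by rewrite mulr_ge0 ?bad_ge0 // mulr_ge0 // K_ge0.
Qed.

Definition TC (s : seq W) : R := seq_cost c (ds_encode ys s).

Definition a (t : nat) : R := Ex t (fun s => Fl (st_list (fin m s))).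

Lemma TC_rcons s x : TC (rcons s x) = TC s + c (nth (word0 m) ys (index x (st_list (fin m s)))).
Proof.
by rewrite /TC /seq_cost /ds_encode ds_positions_rcons map_rcons -cats1 big_cat big_seq1.
Qed.

Lemma Ex_TC t : Ex t TC = \sum_(i < t) a i.
Proof.
elim: t => [|t IH].
  by rewrite Ex0 big_ord0 /TC /seq_cost /ds_encode /= big_nil.
rewrite Ex_rcons big_ord_recr /= -IH.
rewrite (Ex_ext _ _ (fun s => TC s + Fl (st_list (fin m s)))); first by rewrite Ex_add.
move=> s; rewrite /Fl -[TC s]mul1r -P_sum1 mulr_suml -big_split /=.
by apply: eq_bigr => x _; rewrite TC_rcons mulrDr.
Qed.

Lemma eac_eq t : expected_avg_cost P c ys t = Ex t TC / t%:R.
Proof.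
rewrite /expected_avg_cost /Ex mulr_suml; apply: eq_bigr => s _; by rewrite mulrA.
Qed.

Section Cheb.
Variables x y : W.
Hypothesis Pxy : P y < P x.
Let mu := P x - P y.
Let f (z : W) : R := (z == x)%:R - (z == y)%:R.
Definition Wf (s : seq W) : R := \sum_(z <- s) (f z - mu).
Let V := \sum_(z : W) P z * (f z - mu) ^+ 2.

Lemma Wf_cons z s : Wf (z :: s) = (f z - mu) + Wf s.
Proof. by rewrite /Wf big_cons. Qed.

Lemma mu_gt0 : 0 < mu.
Proof. by rewrite /mu subr_gt0. Qed.

Lemma sumPind (w : W) : \sum_(z : W) P z * (z == w)%:R = P w.
Proof.
rewrite (bigD1 w) //= eqxx mulr1 big1 ?addr0 // => z /negPf ->; by rewrite mulr0.
Qed.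

Lemma sumPf : \sum_(z : W) P z * (f z - mu) = 0.
Proof.
under eq_bigr do rewrite /f mulrBr mulrBr.
rewrite !sumrB sumPind sumPind -mulr_suml P_sum1 mul1r /mu subrr //.
Qed.

Lemma Ex_Wf t : Ex t Wf = 0.
Proof.
elim: t => [|t IH]; first by rewrite Ex0 /Wf big_nil.
rewrite ExS -[RHS]sumPf; apply: eq_bigr => z _; congr (_ * _).
rewrite (Ex_ext _ _ (fun s => (f z - mu) + Wf s)); last by move=> s; rewrite /Wf big_cons.
by rewrite Ex_add Ex_cst IH addr0.
Qed.

Lemma Ex_Wf2 t : Ex t (fun s => Wf s ^+ 2) = t%:R * V.
Proof.
elim: t => [|t IH]; first by rewrite Ex0 /Wf big_nil expr0n mul0r.
rewrite ExS.
transitivity (\sum_(z : W) P z * ((f z - mu) ^+ 2 + t%:R * V)).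
  apply: eq_bigr => z _; congr (_ * _).
  rewrite (Ex_ext _ _ (fun s => (f z - mu) ^+ 2 + ((f z - mu) *+ 2 * Wf s + Wf s ^+ 2))); last first.
    by move=> s; rewrite Wf_cons; ring.
  rewrite Ex_add Ex_cst Ex_add Ex_scale Ex_Wf IH mulr0 add0r //.
under eq_bigr do rewrite mulrDr.
rewrite big_split /= -mulr_suml P_sum1 mul1r -/V -natr1 mulrDl mul1r addrC //.
Qed.

Lemma Wf_count (s : seq W) :
  Wf s = (count_mem x s)%:R - (count_mem y s)%:R - (size s)%:R * mu.
Proof.
elim: s => [|z s IH]; first by rewrite /Wf big_nil /= !mul0r !subrr.
rewrite /Wf big_cons -/(Wf s) IH /= !natrD /f !(eq_sym z) -natr1.
ring.
Qed.

Lemma Pr_bound t : (0 < t)%N ->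
  Ex t (fun s => if (count_mem x s <= count_mem y s)%N then 1 else 0)
    <= V / mu ^+ 2 / t%:R.
Proof.
move=> t0.
have tmu : 0 < t%:R * mu by rewrite mulr_gt0 ?ltr0n ?mu_gt0.
apply: le_trans (Ex_le _ _ (fun s => (t%:R * mu) ^-2 * Wf s ^+ 2) _) _.
  move=> s; case: ifP => h; last by rewrite mulr_ge0 ?invr_ge0 ?sqr_ge0.
  rewrite Wf_count size_tuple.
  have hc : (count_mem x s)%:R <= (count_mem y s)%:R :> R by rewrite ler_nat.
  set w := (_ - _ - _).
  have hw : w <= - (t%:R * mu) by rewrite /w; lra.
  have hsq : (t%:R * mu) ^+ 2 <= w ^+ 2 by nra.
  rewrite -[X in X <= _](@mulVf _ ((t%:R * mu) ^+ 2)); last by rewrite expf_neq0 // gt_eqF.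
  by rewrite ler_wpM2l // invr_ge0 exprn_ge0 // ltW.
rewrite Ex_scale Ex_Wf2.
have t0' : t%:R != 0 :> R by rewrite pnatr_eq0 -lt0n.
have m0 : mu != 0 by rewrite gt_eqF // mu_gt0.
rewrite le_eqVlt; apply/orP; left; apply/eqP; field.
by rewrite m0 t0'.
Qed.

End Cheb.

Definition Cst : R := 2 * K * \sum_(x : W) \sum_(y : W)
  (if P y < P x then
     (\sum_(z : W) P z * ((z == x)%:R - (z == y)%:R - (P x - P y)) ^+ 2) / (P x - P y) ^+ 2
   else 0).

Lemma a_bound t : (0 < t)%N -> `|a t - L| <= Cst / t%:R.
Proof.
move=> t0.
have -> : a t - L = Ex t (fun s => Fl (st_list (fin m s)) - L) by rewrite Ex_add Ex_cst.
apply: le_trans (Ex_norm _ _) _.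
apply: le_trans (Ex_le _ _ (fun s => 2 * K * bad s) (fun s => bad_bound s)) _.
rewrite Ex_scale /Cst -[X in _ <= X]mulrA ler_wpM2l ?mulr_ge0 ?K_ge0 //.
rewrite /bad Ex_sum mulr_suml; apply: ler_sum => x _.
rewrite Ex_sum mulr_suml; apply: ler_sum => y _.
case: ifP => Pxy; last by rewrite Ex_cst mul0r.
exact: (Pr_bound x y Pxy t t0).
Qed.

Lemma a_cvg : a n @[n --> \oo] --> L.
Proof.
apply/cvgrPdist_le => e e0.
exists (Num.trunc (Cst / e)).+1 => // n /= Hn.
have n0 : (0 < n)%N by apply: leq_trans Hn.
have n0' : 0 < n%:R :> R by rewrite ltr0n.
rewrite distrC; apply: le_trans (a_bound n n0) _.
rewrite ler_pdivrMr // -ler_pdivrMl //.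
apply: ltW; apply: lt_le_trans (truncnS_gt _) _.
by rewrite mulrC ler_nat.
Qed.

End Main.

Theorem theorem4 (R : realType) (m : nat) (hm : (1 <= m)%N)
  (P c : word m -> R)
  (P_ge0 : forall w, 0 <= P w) (P_sum1 : \sum_(w : word m) P w = 1)
  (ws ys : seq (word m))
  (hws : perm_eq ws (enum {: word m}))
  (hwsP : sorted (fun u v => P v <= P u) ws)
  (hys : perm_eq ys (enum {: word m}))
  (hysc : sorted (fun u v => c u <= c v) ys) :
  expected_avg_cost P c ys t @[t --> \oo] -->
    \sum_(p <- zip ws ys) P p.1 * c p.2.
Proof.
have H := cesaro (@a_cvg _ _ _ c _ _ P_ge0 P_sum1 hws hwsP hys).
apply/cvgrPdist_le => e e0.
move/cvgrPdist_le: H => /(_ e e0) [N _ HN].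
exists N.+1 => // n /= Hn.
case: n Hn => [//|n] Hn.
have := HN n Hn.
rewrite /= eac_eq Ex_TC; last exact: P_sum1.
rewrite /arithmetic_mean /series /= => h.
have -> : (\sum_(i < n.+1) a R m P c ys i) = \sum_(0 <= k < n.+1) a R m P c ys k.
  by rewrite big_mkord.
rewrite [_ / _]mulrC; exact: h.
Qed.
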